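(* Let $n$ be a positive integer and let $\mathcal{B}$ be a balanced bipartite graph on $2n$ vertices with parts $V_1$ and $V_2$ such that $\delta(\mathcal{B})\geq\frac{n}{2}+1$. Let $S\subseteq V(\mathcal{B})$ with $|S|=n+1$ such that $\mathcal{B}[S]$ is a forest. If $\min\{|S\cap V_1|,|S\cap V_2|\}=2$, then $n$ is even.
   Context: All graphs are finite and simple. A balanced bipartite graph on $2n$ vertices is a bipartite graph with a given bipartition $(V_1,V_2)$ where $|V_1|=|V_2|=n$. $\delta(G)$ denotes the minimum degree of $G$, and $G[S]$ the subgraph induced by $S\subseteq V(G)$. *)

(* Defs.v *)
From mathcomp Require Import all_boot.
Set Implicit Arguments. Unset Strict Implicit. Unset Printing Implicit Defensive.

Definition simple_graph (T : finType) (e : rel T) : Prop :=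
  symmetric e /\ irreflexive e.

Definition deg (T : finType) (e : rel T) (v : T) : nat := #|[set w | e v w]|.

Definition balanced_bipartite (T : finType) (e : rel T) (V1 V2 : {set T}) (n : nat) : Prop :=
  simple_graph e /\ [disjoint V1 & V2] /\ V1 :|: V2 = [set: T] /\
  #|V1| = n /\ #|V2| = n /\
  (forall x y, e x y -> (x \in V1) && (y \in V2) || (x \in V2) && (y \in V1)).

Definition is_cycle_in (T : finType) (e : rel T) (S : {set T}) (s : seq T) : bool :=
  [&& 2 < size s, uniq s, all (fun x => x \in S) s & cycle e s].

Definition induced_forest (T : finType) (e : rel T) (S : {set T}) : Prop :=
  forall s : seq T, ~~ is_cycle_in e S s.

(* Main.v *)
Require Import Defs.
From mathcomp Require Import all_boot.
From mathcomp Require Import zify.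

Lemma core (n : nat) (T : finType) (e : rel T) (V1 V2 S : {set T}) :
  symmetric e -> [disjoint V1 & V2] -> V1 :|: V2 = [set: T] -> #|V2| = n ->
  (forall x y, x \in V1 -> e x y -> y \in V2) ->
  (forall v : T, n + 2 <= 2 * deg e v) ->
  #|S| = n + 1 -> induced_forest e S -> #|S :&: V1| = 2 -> odd n -> False.
Proof.
move=> esym dis cov cV2 bip hdeg cS forest cS1 on.
have inV2 : forall x, (x \in V2) = (x \notin V1).
  move=> x; have := disjoint_setI0 dis => /setP /(_ x); rewrite !inE => h.
  have : x \in V1 :|: V2 by rewrite cov inE.
  rewrite inE; case: (x \in V1) h => /=; first by move=> ->.
  by [].
have SV2 : S :&: V2 = S :\: V1.
  by apply/setP=> x; rewrite !inE inV2 andbC.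
have cS2 : #|S :&: V2| = n - 1.
  have := cardsID V1 S; rewrite -SV2 cS1 cS; lia.
have cV2S : #|V2 :\: S| = 1.
  have := cardsID S V2; rewrite setIC cS2 cV2; lia.
have hN : forall a, a \in V1 -> n + 2 <= 2 * (#|[set w | e a w] :&: (S :&: V2)| + 1).
  move=> a aV1; have := hdeg a; rewrite /deg.
  have := cardsID S [set w | e a w].
  have sub : [set w | e a w] :\: S \subset V2 :\: S.
    by apply/subsetP=> w; rewrite !inE => /andP [-> h]; rewrite (bip a) //.
  have := subset_leq_card sub; rewrite cV2S.
  have -> : [set w | e a w] :&: (S :&: V2) = [set w | e a w] :&: S.
    apply/setP=> w; rewrite !inE; case h: (e a w) => //=.
    by rewrite (bip a w aV1 h) andbT.
  lia.
have /cards2P [a [b [ab habS]]] : #|S :&: V1| == 2 by rewrite cS1.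
have aS : a \in S :&: V1 by rewrite habS !inE eqxx.
have bS : b \in S :&: V1 by rewrite habS !inE eqxx orbT.
move: aS bS; rewrite !inE => /andP [aS aV1] /andP [bS bV1].
set X := [set w | e a w] :&: (S :&: V2).
set Y := [set w | e b w] :&: (S :&: V2).
have hX := hN a aV1; have hY := hN b bV1.
have hU : #|X :|: Y| <= n - 1.
  rewrite -cS2; apply: subset_leq_card; apply/subsetP=> w.
  by rewrite !inE => /orP [] /and3P [_ -> ->].
have := cardsU X Y.
have := odd_double_half n; rewrite on -muln2 /= => hn hc.
have /card_gt1P [x [y [xI yI xy]]] : 1 < #|X :&: Y|.
  move: hX hY; rewrite -/X -/Y => hX hY; lia.
move: xI yI; rewrite !inE => /andP [/and3P [ax xS xV2] /and3P [bx _ _]]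
  /andP [/and3P [ay yS yV2] /and3P [by' _ _]].
have nV : forall u v, u \in V1 -> v \in V2 -> u != v.
  by move=> u v uV vV; apply/eqP=> h; move: vV; rewrite -h inV2 uV.
apply/negP: (forest [:: a; x; b; y]).
rewrite /is_cycle_in /= !inE aS xS bS yS /= ax by' (esym x b) bx (esym y a) ay /=.
rewrite !negb_or ab xy (nV a x) // (nV a y) // (nV b y) // eq_sym (nV b x) //.
Qed.

Theorem theorem2p4 (n : nat) (T : finType) (e : rel T) (V1 V2 : {set T}) (S : {set T}) :
  0 < n ->
  balanced_bipartite e V1 V2 n ->
  (forall v : T, n + 2 <= 2 * deg e v) ->
  #|S| = n + 1 ->
  induced_forest e S ->
  minn #|S :&: V1| #|S :&: V2| = 2 ->
  ~~ odd n.
Proof.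
move=> _ [[esym _] [dis [cov [c1 [c2 bip]]]]] hdeg cS forest hmin.
apply/negP=> on.
have bip1 : forall x y, x \in V1 -> e x y -> y \in V2.
  move=> x y xV h; move: (bip x y h); rewrite xV /=.
  case/orP=> // /andP [xV2 _].
  by have := disjoint_setI0 dis => /setP /(_ x); rewrite !inE xV xV2.
have bip2 : forall x y, x \in V2 -> e x y -> y \in V1.
  move=> x y xV h; move: (bip x y h); rewrite xV /=.
  case/orP=> // /andP [xV1 _].
  by have := disjoint_setI0 dis => /setP /(_ x); rewrite !inE xV xV1.
move: hmin; rewrite /minn; case: ltnP => _ h.
  exact: (@core _ _ _ _ _ _ esym dis cov c2 bip1 hdeg cS forest h on).
rewrite disjoint_sym in dis; rewrite setUC in cov.
exact: (@core _ _ _ _ _ _ esym dis cov c1 bip2 hdeg cS forest h on).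
Qed.
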